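(* Let $A$ be the $8$-dimensional Hopf algebra of the context and $\tau$ a Hopf automorphism of $A$, identified with the matrix $\begin{pmatrix}a&b\\c&d\end{pmatrix}$ by $\tau(x)=ax+by$, $\tau(y)=cx+dy$ (and $\tau(g)=g$). (1) If $\tau^2=1$ and $m$ is a positive even integer, then $\nu_{m,\tau}(A)=\frac{m^2}{2}\big(1+\det(\tau)\big)$; consequently $\nu_{m,\tau}(A)=m^2$ if $\det(\tau)=1$ and $\nu_{m,\tau}(A)=0$ if $\det(\tau)=-1$. (2) If $\tau^3=1$, then $\nu_{3,\tau}(A)=(\mathrm{Tr}(\tau)+\det(\tau))^2+(\mathrm{Tr}(\tau)+1)(1-\det(\tau))$; consequently $\nu_{3,\tau}(A)=9$ if $\tau=\mathrm{id}$ and $\nu_{3,\tau}(A)=0$ if $\tau\neq\mathrm{id}$.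
   Context: $k$ is algebraically closed of characteristic $0$. $A=k\langle g,x,y\mid gx=-xg,\ gy=-yg,\ xy=-yx,\ g^2=1,\ x^2=y^2=0\rangle$ with $g$ grouplike, $\Delta(x)=x\otimes g+1\otimes x$, $\Delta(y)=y\otimes g+1\otimes y$, $\varepsilon(x)=\varepsilon(y)=0$, $S(g)=g$, $S(x)=gx$, $S(y)=gy$. Every Hopf automorphism of $A$ fixes $g$ and acts linearly and invertibly on $\mathrm{span}(x,y)$. For a Hopf automorphism $\tau$ whose order divides $m$, define $P_{m-1,\tau}(h)=\sum(\tau^{m-1}\cdot h_1)(\tau^{m-2}\cdot h_2)\cdots(\tau\cdot h_{m-1})$ (Sweedler notation) and the twisted Frobenius–Schur indicator $\nu_{m,\tau}(A)=\mathrm{Tr}(S\circ P_{m-1,\tau})$, the trace of the linear map $S\circ P_{m-1,\tau}:A\to A$. $\mathrm{Tr}(\tau)=a+d$ and $\det(\tau)=ad-bc$. *)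

(* Defs.v *)
From HB Require Import structures.
From mathcomp Require Import all_boot all_order all_algebra.
Set Implicit Arguments. Unset Strict Implicit. Unset Printing Implicit Defensive.
Import Order.TTheory GRing.Theory Num.Theory.
Local Open Scope ring_scope.

(* The 8-dimensional Hopf algebra
   A = k<g,x,y | gx=-xg, gy=-yg, xy=-yx, g^2=1, x^2=y^2=0>
   is modelled on its PBW basis  g^i x^a y^b  (i,a,b in {0,1}),
   indexed by [idx] = bool * bool * bool. *)

Notation idx := (bool * bool * bool)%type.

Section Hopf.
Variable k : fieldType.

Local Notation Alg := {ffun idx -> k}.
Local Notation Alg2 := {ffun (idx * idx) -> k}.

Definition sc (I : finType) (c : k) (f : {ffun I -> k}) : {ffun I -> k} :=
  [ffun s => c * f s].
Local Notation "c *s f" := (sc c f) (at level 40).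

Definition bas (t : idx) : Alg := [ffun s => (s == t)%:R].

(* product of basis vectors:
   g^i x^a y^b . g^j x^c y^d = (-1)^((a+b)j + bc) g^(i+j) x^(a+c) y^(b+d),
   which is 0 when a = c = 1 or b = d = 1 (x^2 = y^2 = 0). *)
Definition bmul (s t : idx) : Alg :=
  let: (i, a, b) := s in
  let: (j, c, d) := t in
  if (a && c) || (b && d) then 0
  else (-1 : k) ^+ ((a + b) * j + b * c)%N *s bas (i (+) j, a || c, b || d).

Definition mulA (u v : Alg) : Alg :=
  \sum_(s : idx) \sum_(t : idx) (u s * v t) *s bmul s t.

Definition oneA : Alg := bas (false, false, false).
Definition gA : Alg := bas (true, false, false).
Definition xA : Alg := bas (false, true, false).
Definition yA : Alg := bas (false, false, true).

Definition powA (u : Alg) (n : nat) : Alg := iter n (mulA u) oneA.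

Definition tens (u v : Alg) : Alg2 := [ffun p => u p.1 * v p.2].

Definition mul2 (U V : Alg2) : Alg2 :=
  \sum_(p : idx * idx) \sum_(q : idx * idx)
     (U p * V q) *s tens (bmul p.1 q.1) (bmul p.2 q.2).

Definition one2 : Alg2 := tens oneA oneA.
Definition pow2 (U : Alg2) (n : nat) : Alg2 := iter n (mul2 U) one2.

Definition DeltaB (t : idx) : Alg2 :=
  let: (i, a, b) := t in
  mul2 (mul2 (pow2 (tens gA gA) i) (pow2 (tens xA gA + tens oneA xA) a))
       (pow2 (tens yA gA + tens oneA yA) b).

Definition Delta (u : Alg) : Alg2 := \sum_(t : idx) u t *s DeltaB t.

(* Counit: the algebra map with eps(g) = 1, eps(x) = eps(y) = 0,
   i.e. eps(g^i x^a y^b) = 1 if a = b = 0 and 0 otherwise. *)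
Definition epsA (u : Alg) : k := u (false, false, false) + u (true, false, false).

(* Antipode: the anti-algebra map with S(g) = g, S(x) = gx, S(y) = gy,
   so S(g^i x^a y^b) = S(y)^b S(x)^a S(g)^i. *)
Definition SB (t : idx) : Alg :=
  let: (i, a, b) := t in
  mulA (mulA (powA (mulA gA yA) b) (powA (mulA gA xA) a)) (powA gA i).

Definition SA (u : Alg) : Alg := \sum_(t : idx) u t *s SB t.

Definition tauB (T : 'M[k]_2) (t : idx) : Alg :=
  let: (i, a, b) := t in
  mulA (mulA (powA gA i) (powA (T 0 0 *s xA + T 0 1 *s yA) a))
       (powA (T 1 0 *s xA + T 1 1 *s yA) b).

Definition tauA (T : 'M[k]_2) (u : Alg) : Alg := \sum_(t : idx) u t *s tauB T t.

Definition tauPow (T : 'M[k]_2) (n : nat) (u : Alg) : Alg := iter n (tauA T) u.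

(* P_{n,tau}(h) = sum (tau^n h_1)(tau^(n-1) h_2) ... (tau h_n), defined
   through the (coassociative) iterated coproduct:
   P_0(h) = eps(h) 1,  P_{n+1}(h) = sum (tau^(n+1) h_1) P_n(h_2). *)
Fixpoint Ptau (T : 'M[k]_2) (n : nat) (h : Alg) : Alg :=
  match n with
  | 0 => epsA h *s oneA
  | n'.+1 => \sum_(p : idx * idx)
               Delta h p *s mulA (tauPow T n'.+1 (bas p.1)) (Ptau T n' (bas p.2))
  end.

Definition traceA (f : Alg -> Alg) : k := \sum_(t : idx) f (bas t) t.

Definition nu (m : nat) (T : 'M[k]_2) : k :=
  traceA (fun h => SA (Ptau T m.-1 h)).

End Hopf.

(* Main.v *)
Require Import Defs.
From HB Require Import structures.
From mathcomp Require Import all_boot all_order all_algebra.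
From mathcomp Require Import ring.
Import Order.TTheory GRing.Theory Num.Theory.
Local Open Scope ring_scope.
Set Implicit Arguments. Unset Strict Implicit. Unset Printing Implicit Defensive.

Section S.
Variable k : fieldType.
Local Notation Alg := {ffun idx -> k}.
Local Notation Alg2 := {ffun (idx * idx) -> k}.
Local Notation mulA := Defs.mulA.

Lemma sum_idx (V : nmodType) (F : idx -> V) :
  \sum_(t : idx) F t = F (true, true, true) + F (true, true, false) +
  (F (true, false, true) + F (true, false, false)) +
  (F (false, true, true) + F (false, true, false) +
   (F (false, false, true) + F (false, false, false))).
Proof.
have -> : \sum_(t : idx) F t = \sum_(p : (bool*bool)*bool) F (p.1,p.2) by apply: eq_bigr => -[].
rewrite -(pair_bigA _ (fun a b => F (a,b))) /=.
have -> : forall G : bool*bool -> V, \sum_(p : bool*bool) G p = \sum_(p : bool*bool) G (p.1,p.2) by move=> G; apply: eq_bigr => -[].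
by rewrite -(pair_bigA _ (fun a b => \sum_(j:bool) F ((a,b),j))) /= !big_bool /=.
Qed.

Definition mk (e0 e1 e2 e3 e4 e5 e6 e7 : k) : Alg :=
  [ffun t : idx => match t with
   | (false,false,false) => e0 | (false,false,true) => e1
   | (false,true,false) => e2 | (false,true,true) => e3
   | (true,false,false) => e4 | (true,false,true) => e5
   | (true,true,false) => e6 | (true,true,true) => e7 end].

Lemma scE (I : finType) (c : k) (f : {ffun I -> k}) x : sc c f x = c * f x.
Proof. by rewrite ffunE. Qed.

Lemma mk_add e0 e1 e2 e3 e4 e5 e6 e7 f0 f1 f2 f3 f4 f5 f6 f7 :
  mk e0 e1 e2 e3 e4 e5 e6 e7 + mk f0 f1 f2 f3 f4 f5 f6 f7 =
  mk (e0+f0) (e1+f1) (e2+f2) (e3+f3) (e4+f4) (e5+f5) (e6+f6) (e7+f7).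
Proof. by apply/ffunP => -[[[|] [|]] [|]]; rewrite !ffunE. Qed.

Lemma mk_sc c e0 e1 e2 e3 e4 e5 e6 e7 :
  sc c (mk e0 e1 e2 e3 e4 e5 e6 e7) =
  mk (c*e0) (c*e1) (c*e2) (c*e3) (c*e4) (c*e5) (c*e6) (c*e7).
Proof. by apply/ffunP => -[[[|] [|]] [|]]; rewrite !ffunE. Qed.

Lemma mk0 : (0 : Alg) = mk 0 0 0 0 0 0 0 0.
Proof. by apply/ffunP => -[[[|] [|]] [|]]; rewrite !ffunE. Qed.

Lemma bas_mk t : bas k t = match t with
   | (false,false,false) => mk 1 0 0 0 0 0 0 0 | (false,false,true) => mk 0 1 0 0 0 0 0 0
   | (false,true,false) => mk 0 0 1 0 0 0 0 0 | (false,true,true) => mk 0 0 0 1 0 0 0 0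
   | (true,false,false) => mk 0 0 0 0 1 0 0 0 | (true,false,true) => mk 0 0 0 0 0 1 0 0
   | (true,true,false) => mk 0 0 0 0 0 0 1 0 | (true,true,true) => mk 0 0 0 0 0 0 0 1 end.
Proof.
by case: t => [[[|] [|]] [|]]; apply/ffunP => -[[[|] [|]] [|]]; rewrite !ffunE.
Qed.

Lemma mk_eq e0 e1 e2 e3 e4 e5 e6 e7 f0 f1 f2 f3 f4 f5 f6 f7 :
  e0 = f0 -> e1 = f1 -> e2 = f2 -> e3 = f3 -> e4 = f4 -> e5 = f5 -> e6 = f6 -> e7 = f7 ->
  mk e0 e1 e2 e3 e4 e5 e6 e7 = mk f0 f1 f2 f3 f4 f5 f6 f7.
Proof. by move=> -> -> -> -> -> -> -> ->. Qed.

Lemma sc1 (I : finType) (f : {ffun I -> k}) : sc 1 f = f.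
Proof. by apply/ffunP => x; rewrite !ffunE mul1r. Qed.
Lemma sc0 (I : finType) (f : {ffun I -> k}) : sc 0 f = 0.
Proof. by apply/ffunP => x; rewrite !ffunE mul0r. Qed.

Lemma sum_coll (I J : finType) (s : I) (c : I -> k) (G : I -> {ffun J -> k}) :
  (forall x, x != s -> c x = 0) -> \sum_x sc (c x) (G x) = sc (c s) (G s).
Proof.
move=> H; rewrite (bigD1 s) //= big1 ?addr0 // => x Hx.
by rewrite H // sc0.
Qed.

Lemma tens_addl (u v w : Alg) : tens (u + v) w = tens u w + tens v w.
Proof. by apply/ffunP => x; rewrite !ffunE mulrDl. Qed.
Lemma tens_addr (u v w : Alg) : tens u (v + w) = tens u v + tens u w.
Proof. by apply/ffunP => x; rewrite !ffunE mulrDr. Qed.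
Lemma tens_scl c (u v : Alg) : tens (sc c u) v = sc c (tens u v).
Proof. by apply/ffunP => x; rewrite !ffunE mulrA. Qed.
Lemma tens_scr c (u v : Alg) : tens u (sc c v) = sc c (tens u v).
Proof. by apply/ffunP => x; rewrite !ffunE mulrCA. Qed.
Lemma tens0l (v : Alg) : tens 0 v = 0.
Proof. by apply/ffunP => x; rewrite !ffunE mul0r. Qed.
Lemma tens0r (v : Alg) : tens v 0 = 0.
Proof. by apply/ffunP => x; rewrite !ffunE mulr0. Qed.
Lemma sc_add2 c (U V : Alg2) : sc c (U + V) = sc c U + sc c V.
Proof. by apply/ffunP => x; rewrite !ffunE mulrDr. Qed.
Lemma sc_sc (I : finType) c d (f : {ffun I -> k}) : sc c (sc d f) = sc (c * d) f.
Proof. by apply/ffunP => x; rewrite !ffunE mulrA. Qed.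

Lemma mul2_addl (U V W : Alg2) : mul2 (U + W) V = mul2 U V + mul2 W V.
Proof. symmetry.
apply/ffunP => x; rewrite !ffunE !sum_ffunE -big_split /=; apply: eq_bigr => p _.
rewrite !sum_ffunE -big_split /=; apply: eq_bigr => q _.
by rewrite !ffunE mulrDl !mulrDl.
Qed.
Lemma mul2_addr (U V W : Alg2) : mul2 U (V + W) = mul2 U V + mul2 U W.
Proof. symmetry.
apply/ffunP => x; rewrite !ffunE !sum_ffunE -big_split /=; apply: eq_bigr => p _.
rewrite !sum_ffunE -big_split /=; apply: eq_bigr => q _.
by rewrite !ffunE mulrDr !mulrDl.
Qed.
Lemma mul2_scl c (U V : Alg2) : mul2 (sc c U) V = sc c (mul2 U V).
Proof.
apply/ffunP => x; rewrite !ffunE !sum_ffunE big_distrr /=; apply: eq_bigr => p _.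
rewrite !sum_ffunE big_distrr /=; apply: eq_bigr => q _.
by rewrite !ffunE !mulrA.
Qed.
Lemma mul2_scr c (U V : Alg2) : mul2 U (sc c V) = sc c (mul2 U V).
Proof.
apply/ffunP => x; rewrite !ffunE !sum_ffunE big_distrr /=; apply: eq_bigr => p _.
rewrite !sum_ffunE big_distrr /=; apply: eq_bigr => q _.
rewrite !ffunE; ring.
Qed.

Lemma sum_coll2 (I J : finType) (a b : I) (U V : I -> k) (H : I -> I -> {ffun J -> k}) :
  (forall p, p != a -> U p = 0) -> (forall q, q != b -> V q = 0) ->
  \sum_p \sum_q sc (U p * V q) (H p q) = sc (U a * V b) (H a b).
Proof.
move=> HU HV; rewrite (bigD1 a) //= [X in _ + X]big1 ?addr0 => [|p Hp].
  rewrite (bigD1 b) //= [X in _ + X]big1 ?addr0 // => q Hq.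
  by rewrite HV // mulr0 sc0.
by apply: big1 => q _; rewrite HU // mul0r sc0.
Qed.

Lemma basE t s : bas k t s = (s == t)%:R.
Proof. by rewrite ffunE. Qed.

Lemma mulA_bas s t : mulA (bas k s) (bas k t) = bmul k s t.
Proof.
rewrite /mulA (@sum_coll2 _ _ s t) => [|p Hp|q Hq].
- by rewrite !basE !eqxx mulr1 sc1.
- by rewrite basE (negbTE Hp).
- by rewrite basE (negbTE Hq).
Qed.

Lemma ind2 (p1 p2 s1 s2 : idx) : (p1, p2) != (s1, s2) -> (p1 == s1)%:R * (p2 == s2)%:R = 0 :> k.
Proof.
case: (eqVneq p1 s1) => [->|_]; last by rewrite mul0r.
case: (eqVneq p2 s2) => [->|_]; last by rewrite mulr0.
by rewrite eqxx.
Qed.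

Lemma mul2_tensbas s1 s2 t1 t2 :
  mul2 (tens (bas k s1) (bas k s2)) (tens (bas k t1) (bas k t2)) = tens (bmul k s1 t1) (bmul k s2 t2).
Proof.
rewrite /mul2 (@sum_coll2 _ _ (s1,s2) (t1,t2)) => [|p Hp|q Hq].
- by rewrite !ffunE !eqxx /= !mulr1 sc1.
- case: p Hp => p1 p2 Hp; rewrite !ffunE /=.
  by rewrite ind2.
- case: q Hq => p1 p2 Hp; rewrite !ffunE /=.
  by rewrite ind2.
Qed.

Lemma mul2_0l (V : Alg2) : mul2 0 V = 0.
Proof.
apply/ffunP => x; rewrite ffunE sum_ffunE big1 // => p _.
by rewrite sum_ffunE big1 // => q _; rewrite !ffunE !mul0r.
Qed.
Lemma mul2_0r (V : Alg2) : mul2 V 0 = 0.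
Proof.
apply/ffunP => x; rewrite ffunE sum_ffunE big1 // => p _.
by rewrite sum_ffunE big1 // => q _; rewrite !ffunE !mulr0 mul0r.
Qed.
Lemma sc_02 c : sc c (0 : Alg2) = 0.
Proof. by apply/ffunP => x; rewrite !ffunE mulr0. Qed.

Lemma DS_add (U V : Alg2) (F : idx * idx -> Alg) :
  \sum_p sc ((U + V) p) (F p) = \sum_p sc (U p) (F p) + \sum_p sc (V p) (F p).
Proof.
rewrite -big_split; apply: eq_bigr => p _ /=; apply/ffunP => x; rewrite !ffunE; ring.
Qed.
Lemma DS_sc c (U : Alg2) (F : idx * idx -> Alg) :
  \sum_p sc ((sc c U) p) (F p) = sc c (\sum_p sc (U p) (F p)).
Proof.
apply/ffunP => x; rewrite ffunE !sum_ffunE big_distrr; apply: eq_bigr => p _ /=.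
rewrite !ffunE; ring.
Qed.
Lemma DS_0 (F : idx * idx -> Alg) : \sum_p sc ((0 : Alg2) p) (F p) = 0.
Proof. by apply: big1 => p _; rewrite ffunE sc0. Qed.
Lemma DS_tens s t (F : idx * idx -> Alg) :
  \sum_p sc (tens (bas k s) (bas k t) p) (F p) = F (s, t).
Proof.
rewrite (@sum_coll _ _ (s,t)) => [|p Hp].
  by rewrite !ffunE !eqxx /= mulr1 sc1.
by case: p Hp => p1 p2 Hp; rewrite !ffunE /= ind2.
Qed.

Lemma Delta_bas t : Delta (bas k t) = DeltaB k t.
Proof.
rewrite /Delta (@sum_coll _ _ t) => [|x Hx].
  by rewrite basE eqxx sc1.
by rewrite basE (negbTE Hx).
Qed.

Lemma Ptau_S T n t : Ptau T n.+1 (bas k t) =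
  \sum_p sc (DeltaB k t p) (mulA (tauPow T n.+1 (bas k p.1)) (Ptau T n (bas k p.2))).
Proof. by rewrite /= Delta_bas. Qed.

Lemma mulA_mk e0 e1 e2 e3 e4 e5 e6 e7 f0 f1 f2 f3 f4 f5 f6 f7 :
  mulA (mk e0 e1 e2 e3 e4 e5 e6 e7) (mk f0 f1 f2 f3 f4 f5 f6 f7) =
  mk (e0 * f0 + e4 * f4)
(e0 * f1 + e1 * f0 + e4 * f5 - e5 * f4)
(e0 * f2 + e2 * f0 + e4 * f6 - e6 * f4)
(e0 * f3 - e1 * f2 + e2 * f1 + e3 * f0 + e4 * f7 + e5 * f6 - e6 * f5 + e7 * f4)
(e0 * f4 + e4 * f0)
(e0 * f5 - e1 * f4 + e4 * f1 + e5 * f0)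
(e0 * f6 - e2 * f4 + e4 * f2 + e6 * f0)
(e0 * f7 + e1 * f6 - e2 * f5 + e3 * f4 + e4 * f3 - e5 * f2 + e6 * f1 + e7 * f0).
Proof.
apply/ffunP => r; rewrite /mulA sum_ffunE sum_idx.
rewrite !sum_ffunE !sum_idx !scE.
rewrite /bmul /=.
case: r => [[[|] [|]] [|]]; rewrite /= ?ffunE /=.
all: ring.
Qed.

Definition DBx (t : idx) (F : idx * idx -> Alg) : Alg :=
  let o := (false,false,false) in let g := (true,false,false) in
  let x := (false,true,false) in let y := (false,false,true) in
  let xy := (false,true,true) in let gx := (true,true,false) in
  let gy := (true,false,true) in let gxy := (true,true,true) in
  match t with
  | (false,false,false) => F (o, o)
  | (false,false,true) => F (o, y) + F (y, g)
  | (false,true,false) => F (o, x) + F (x, g)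
  | (false,true,true) => F (o, xy) - F (y, gx) + F (x, gy) + F (xy, o)
  | (true,false,false) => F (g, g)
  | (true,false,true) => F (g, gy) + F (gy, o)
  | (true,true,false) => F (g, gx) + F (gx, o)
  | (true,true,true) => F (g, gxy) - F (gy, x) + F (gx, y) + F (gxy, g)
  end.

Lemma DS_DeltaB t F : \sum_p sc (DeltaB k t p) (F p) = DBx t F.
Proof.
case: t => [[[|] [|]] [|]];
rewrite /DeltaB /pow2 /= /one2 /gA /xA /yA /oneA;
do 4 (rewrite ?(mul2_tensbas, tens_addl, tens_addr, mul2_addl, mul2_addr, tens_scl, tens_scr, tens0l, tens0r, mul2_0l, mul2_0r, mul2_scl, mul2_scr, sc_02, sc_add2, addr0, add0r, sc_sc); rewrite /bmul /=);
rewrite !(DS_add, DS_sc, DS_0, DS_tens) /=;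
apply/ffunP => r; rewrite !ffunE; ring.
Qed.
End S.


Section S2.
Variable k : fieldType.
Variable T : 'M[k]_2.
Local Notation Alg := {ffun idx -> k}.
Local Notation mulA := Defs.mulA.
Local Notation a := (T 0 0).
Local Notation b := (T 0 1).
Local Notation c := (T 1 0).
Local Notation d := (T 1 1).

Lemma mk_sub e0 e1 e2 e3 e4 e5 e6 e7 f0 f1 f2 f3 f4 f5 f6 f7 :
  mk e0 e1 e2 e3 e4 e5 e6 e7 - mk f0 f1 f2 f3 f4 f5 f6 f7 =
  mk (e0-f0) (e1-f1) (e2-f2) (e3-f3) (e4-f4) (e5-f5) (e6-f6) (e7-f7) :> Alg.
Proof. by apply/ffunP => -[[[|] [|]] [|]]; rewrite !ffunE. Qed.

Ltac mknorm := rewrite ?(bas_mk, mk_sc, mk_add, mk_sub, mulA_mk) /=;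
  rewrite ?(bas_mk, mk_sc, mk_add, mk_sub, mulA_mk) /=.

Lemma tauB_val t : tauB T t = match t with
 | (false,false,false) => mk 1 0 0 0 0 0 0 0
 | (false,false,true) => mk 0 d c 0 0 0 0 0
 | (false,true,false) => mk 0 b a 0 0 0 0 0
 | (false,true,true) => mk 0 0 0 (a*d - b*c) 0 0 0 0
 | (true,false,false) => mk 0 0 0 0 1 0 0 0
 | (true,false,true) => mk 0 0 0 0 0 d c 0
 | (true,true,false) => mk 0 0 0 0 0 b a 0
 | (true,true,true) => mk 0 0 0 0 0 0 0 (a*d - b*c) end.
Proof.
case: t => [[[|] [|]] [|]]; rewrite /tauB /powA /= /gA /xA /yA /oneA;
rewrite !(bas_mk, mk_sc, mk_add, mulA_mk) /=; apply: mk_eq; ring.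
Qed.

Lemma SB_val t : SB k t = match t with
 | (false,false,false) => mk 1 0 0 0 0 0 0 0
 | (false,false,true) => mk 0 0 0 0 0 1 0 0
 | (false,true,false) => mk 0 0 0 0 0 0 1 0
 | (false,true,true) => mk 0 0 0 1 0 0 0 0
 | (true,false,false) => mk 0 0 0 0 1 0 0 0
 | (true,false,true) => mk 0 (-1) 0 0 0 0 0 0
 | (true,true,false) => mk 0 0 (-1) 0 0 0 0 0
 | (true,true,true) => mk 0 0 0 0 0 0 0 1 end.
Proof.
case: t => [[[|] [|]] [|]]; rewrite /SB /powA /= /gA /xA /yA /oneA;
rewrite !(bas_mk, mk_sc, mk_add, mulA_mk) /=; apply: mk_eq; ring.
Qed.

Lemma tauA_mk e0 e1 e2 e3 e4 e5 e6 e7 : tauA T (mk e0 e1 e2 e3 e4 e5 e6 e7) =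
  mk e0 (e1*d + e2*b) (e1*c + e2*a) (e3*(a*d - b*c)) e4 (e5*d + e6*b) (e5*c + e6*a) (e7*(a*d - b*c)).
Proof.
rewrite /tauA sum_idx !tauB_val !ffunE /= !mk_sc !mk_add; apply: mk_eq; ring.
Qed.

Lemma SA_mk (e0 e1 e2 e3 e4 e5 e6 e7 : k) : SA (mk e0 e1 e2 e3 e4 e5 e6 e7) =
  mk e0 (-e5) (-e6) e3 e4 e1 e2 e7.
Proof.
rewrite /SA sum_idx !SB_val !ffunE /= !mk_sc !mk_add; apply: mk_eq; ring.
Qed.

Lemma tauA_bas s : tauA T (bas k s) = tauB T s.
Proof.
rewrite /tauA (@sum_coll _ _ _ s) => [|x Hx]; first by rewrite basE eqxx sc1.
by rewrite basE (negbTE Hx).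
Qed.

Lemma Ptau_S3 n t (G Pn : idx -> Alg) :
  (forall s, tauPow T n.+1 (bas k s) = G s) -> (forall s, Ptau T n (bas k s) = Pn s) ->
  Ptau T n.+1 (bas k t) = DBx t (fun p => mulA (G p.1) (Pn p.2)).
Proof.
move=> HG HP; rewrite Ptau_S -DS_DeltaB; apply: eq_bigr => p _.
by rewrite HG HP.
Qed.

End S2.


Section S3.
Variable k : fieldType.
Variable T : 'M[k]_2.
Local Notation Alg := {ffun idx -> k}.
Local Notation mulA := Defs.mulA.
Local Notation a := (T 0 0).
Local Notation b := (T 0 1).
Local Notation c := (T 1 0).
Local Notation d := (T 1 1).

Definition tauBv (t : idx) : Alg := match t with
 | (false,false,false) => mk 1 0 0 0 0 0 0 0
 | (false,false,true) => mk 0 d c 0 0 0 0 0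
 | (false,true,false) => mk 0 b a 0 0 0 0 0
 | (false,true,true) => mk 0 0 0 (a*d - b*c) 0 0 0 0
 | (true,false,false) => mk 0 0 0 0 1 0 0 0
 | (true,false,true) => mk 0 0 0 0 0 d c 0
 | (true,true,false) => mk 0 0 0 0 0 b a 0
 | (true,true,true) => mk 0 0 0 0 0 0 0 (a*d - b*c) end.

Lemma tauBvE t : tauB T t = tauBv t.
Proof. exact: tauB_val. Qed.

Definition Qe (n : nat) (t : idx) : Alg := match t with
 | (false,false,false) => mk 1 0 0 0 0 0 0 0
 | (false,false,true) => mk 0 (n%:R*d) (n%:R*c) 0 0 (-n%:R) 0 0
 | (false,true,false) => mk 0 (n%:R*b) (n%:R*a) 0 0 0 (-n%:R) 0
 | (false,true,true) => mk 0 0 0 (n%:R*n%:R*(1+(a*d-b*c))) 0 0 0 (-(n%:R*n%:R*(a+d)))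
 | (true,false,false) => mk 1 0 0 0 0 0 0 0
 | (true,false,true) => mk 0 (n%:R*d) (n%:R*c) 0 0 n%:R 0 0
 | (true,true,false) => mk 0 (n%:R*b) (n%:R*a) 0 0 0 n%:R 0
 | (true,true,true) => mk 0 0 0 (n%:R*n%:R*(1+(a*d-b*c))) 0 0 0 (n%:R*n%:R*(a+d)) end.

Definition Qo (n : nat) (t : idx) : Alg := match t with
 | (false,false,false) => mk 1 0 0 0 0 0 0 0
 | (false,false,true) => mk 0 ((n%:R+1)*d) ((n%:R+1)*c) 0 0 (-n%:R) 0 0
 | (false,true,false) => mk 0 ((n%:R+1)*b) ((n%:R+1)*a) 0 0 0 (-n%:R) 0
 | (false,true,true) => mk 0 0 0 (n%:R*n%:R + (n%:R+1)*(n%:R+1)*(a*d-b*c)) 0 0 0 (-(n%:R*(n%:R+1)*(a+d)))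
 | (true,false,false) => mk 0 0 0 0 1 0 0 0
 | (true,false,true) => mk 0 n%:R 0 0 0 ((n%:R+1)*d) ((n%:R+1)*c) 0
 | (true,true,false) => mk 0 0 n%:R 0 0 ((n%:R+1)*b) ((n%:R+1)*a) 0
 | (true,true,true) => mk 0 0 0 (n%:R*(n%:R+1)*(a+d)) 0 0 0 (n%:R*n%:R + (n%:R+1)*(n%:R+1)*(a*d-b*c)) end.

Lemma P0_val t : Ptau T 0 (bas k t) = Qe 0 t.
Proof.
case: t => [[[|] [|]] [|]]; rewrite /= /epsA /oneA !bas_mk /= !ffunE /= mk_sc;
apply: mk_eq; rewrite ?mulr0n; ring.
Qed.

Lemma step_odd n (HG : forall s, tauPow T (n.*2).+1 (bas k s) = tauBv s)
  (IH : forall s, Ptau T n.*2 (bas k s) = Qe n s) t : Ptau T (n.*2).+1 (bas k t) = Qo n t.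
Proof.
rewrite (@Ptau_S3 _ _ _ t _ _ HG IH).
case: t => [[[|] [|]] [|]]; rewrite /DBx /=;
rewrite ?(mk_add, mk_sub, mulA_mk); apply: mk_eq; ring.
Qed.

Lemma step_even n (HG : forall s, tauPow T (n.*2).+2 (bas k s) = bas k s)
  (IH : forall s, Ptau T (n.*2).+1 (bas k s) = Qo n s) t : Ptau T (n.+1).*2 (bas k t) = Qe n.+1 t.
Proof.
rewrite doubleS (@Ptau_S3 _ _ _ t _ _ HG IH).
case: t => [[[|] [|]] [|]]; rewrite /DBx /= ?bas_mk /=;
rewrite ?(mk_add, mk_sub, mulA_mk) ?mulrSr; apply: mk_eq; ring.
Qed.

End S3.


Lemma det2 (k : comRingType) (T : 'M[k]_2) : \det T = T 0 0 * T 1 1 - T 0 1 * T 1 0.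
Proof.
rewrite (expand_det_row T 0) !big_ord_recl big_ord0 /cofactor /=.
rewrite !det_mx11 !mxE /=.
have E0 : (ord0 : 'I_2) = 0 by apply/val_inj.
have E1 : lift (0 : 'I_2) (0 : 'I_1) = 1 by apply/val_inj.
have E2 : lift ord0 (ord0 : 'I_1) = 1 :> 'I_2 by apply/val_inj.
have E3 : lift (lift ord0 (ord0 : 'I_1)) (0 : 'I_1) = 0 :> 'I_2 by apply/val_inj.
have E4 : lift ord0 (0 : 'I_1) = 1 :> 'I_2 by apply/val_inj.
rewrite E3 E1 ?E4 ?E2 ?E0 /= expr0 expr1; ring.
Qed.
Lemma tr2 (k : comRingType) (T : 'M[k]_2) : \tr T = T 0 0 + T 1 1.
Proof.
rewrite /mxtrace !big_ord_recl big_ord0 addr0 /=.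
have E0 : (ord0 : 'I_2) = 0 by apply/val_inj.
have E2 : lift ord0 (ord0 : 'I_1) = 1 :> 'I_2 by apply/val_inj.
by rewrite E2 E0.
Qed.

Section S4.
Variable k : fieldType.
Variable T : 'M[k]_2.
Local Notation Alg := {ffun idx -> k}.
Local Notation mulA := Defs.mulA.
Local Notation a := (T 0 0).
Local Notation b := (T 0 1).
Local Notation c := (T 1 0).
Local Notation d := (T 1 1).

Lemma tauPow_even (H2 : forall u, tauA T (tauA T u) = u) n u : tauPow T n.*2 u = u.
Proof.
elim: n => [//|n IH]; move: IH; rewrite /tauPow => IH.
by rewrite doubleS !iterS H2 IH.
Qed.

Lemma Pall (H2 : forall u, tauA T (tauA T u) = u) n :
  (forall s, Ptau T n.*2 (bas k s) = Qe T n s) /\ (forall s, Ptau T (n.*2).+1 (bas k s) = Qo T n s).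
Proof.
have HO : forall m s, tauPow T (m.*2).+1 (bas k s) = tauBv T s.
  move=> m s; rewrite -[X in _ = X]tauBvE -tauA_bas -(tauPow_even H2 m (tauA T (bas k s))).
  by rewrite /tauPow -iterSr.
have HE : forall m s, tauPow T (m.*2).+2 (bas k s) = bas k s.
  by move=> m s; rewrite -doubleS tauPow_even.
have Hodd : forall m, (forall s, Ptau T m.*2 (bas k s) = Qe T m s) ->
   forall s, Ptau T (m.*2).+1 (bas k s) = Qo T m s.
  by move=> m IH s; apply: step_odd.
elim: n => [|n [_ IH]].
  by split; [exact: P0_val | apply: Hodd; exact: P0_val].
have IHe : forall s, Ptau T n.+1.*2 (bas k s) = Qe T n.+1 s by move=> s; apply: step_even.
by split => //; apply: Hodd.
Qed.

Lemma nu_even (H2 : forall u, tauA T (tauA T u) = u) n :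
  nu (n.+1).*2 T = 2%:R * (n%:R + 1) ^+ 2 * (1 + (a*d - b*c)).
Proof.
rewrite /nu.
have -> : ((n.+1).*2).-1 = (n.*2).+1 by rewrite doubleS.
rewrite /traceA sum_idx.
have [_ HO] := Pall H2 n.
rewrite !HO /= !SA_mk !ffunE /=; ring.
Qed.


Lemma nu3_val : nu 3 T = (a+d + (a*d-b*c))^+2 + (a+d+1)*(1-(a*d-b*c)).
Proof.
have P1 : forall s, Ptau T 1 (bas k s) = Qo T 0 s.
  move=> s0; apply: (step_odd (n:=0)) => [s|s]; [by rewrite /tauPow /= tauA_bas tauBvE | exact: P0_val].
have P2 : forall t, Ptau T 2 (bas k t) = DBx t (fun p => mulA (tauA T (tauBv T p.1)) (Qo T 0 p.2)).
  move=> t; apply: (@Ptau_S3 _ T 1 t (fun s => tauA T (tauBv T s)) (Qo T 0)) => [s|]; [by rewrite /tauPow /= tauA_bas tauBvE | exact: P1].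
rewrite /nu /traceA sum_idx !P2 /DBx /=.
rewrite !(tauA_mk, mulA_mk, mk_add, mk_sub) !SA_mk !ffunE /=; ring.
Qed.

Lemma part2c (H3 : forall u, tauA T (tauA T (tauA T u)) = u) : T != 1%:M ->
  (a+d + (a*d-b*c))^+2 + (a+d+1)*(1-(a*d-b*c)) = 0.
Proof.
move=> HT.
have Hx := H3 (bas k (false,true,false)).
have Hy := H3 (bas k (false,false,true)).
rewrite tauA_bas tauBvE /= !tauA_mk bas_mk in Hx.
rewrite tauA_bas tauBvE /= !tauA_mk bas_mk in Hy.
have Ex1 := congr1 (fun f : Alg => f (false,false,true)) Hx.
have Ex2 := congr1 (fun f : Alg => f (false,true,false)) Hx.
have Ey1 := congr1 (fun f : Alg => f (false,false,true)) Hy.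
have Ey2 := congr1 (fun f : Alg => f (false,true,false)) Hy.
rewrite /= !ffunE /= in Ex1 Ex2 Ey1 Ey2.
have Eb : ((a+d)^+2 - (a*d-b*c)) * b = 0 by rewrite -Ex1; ring.
have Ec : ((a+d)^+2 - (a*d-b*c)) * c = 0 by rewrite -Ey2; ring.
have Ea : ((a+d)^+2 - (a*d-b*c)) * a - (a+d)*(a*d-b*c) = 1 by rewrite -Ex2; ring.
have Ed : ((a+d)^+2 - (a*d-b*c)) * d - (a+d)*(a*d-b*c) = 1 by rewrite -Ey1; ring.
case: (eqVneq ((a+d)^+2 - (a*d-b*c)) 0) => Hs.
  have Htd : (a+d)*(a*d-b*c) + 1 = 0.
    by move: Ea; rewrite Hs mul0r sub0r => <-; rewrite addrN.
  have -> : (a+d + (a*d-b*c))^+2 + (a+d+1)*(1-(a*d-b*c)) =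
     (a+d+1)*((a+d)*(a*d-b*c) + 1) + (1-(a*d-b*c))*((a+d)^+2 - (a*d-b*c)) by ring.
  by rewrite Htd Hs !mulr0 addr0.
have Hb0 : b = 0 by move/eqP: Eb; rewrite mulf_eq0 (negbTE Hs) /= => /eqP.
have Hc0 : c = 0 by move/eqP: Ec; rewrite mulf_eq0 (negbTE Hs) /= => /eqP.
have Hda : d = a.
  have : ((a+d)^+2 - (a*d-b*c)) * (a - d) = 0.
    have -> : ((a+d)^+2 - (a*d-b*c)) * (a - d) =
      (((a+d)^+2 - (a*d-b*c)) * a - (a+d)*(a*d-b*c)) - (((a+d)^+2 - (a*d-b*c)) * d - (a+d)*(a*d-b*c)) by ring.
    by rewrite Ea Ed subrr.
  move/eqP; rewrite mulf_eq0 (negbTE Hs) /= subr_eq0 => /eqP <-. done.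
have A3 : a ^+ 3 = 1 by rewrite -Ea Hb0 Hc0 Hda; ring.
have Ha1 : a != 1.
  apply: contraNneq HT => Ha; apply/eqP/matrixP => i j; rewrite !mxE.
  have Hi : forall i : 'I_2, i = 0 \/ i = 1.
    by case => [[|[|//]] ?]; [left|right]; apply/val_inj.
  by case: (Hi i) => ->; case: (Hi j) => ->; rewrite ?Hb0 ?Hc0 ?Hda ?Ha.
have Hq : a^+2 + a + 1 = 0.
  have : (a - 1) * (a^+2 + a + 1) = a^+3 - 1 by ring.
  rewrite A3 subrr.
  by move/eqP; rewrite mulf_eq0 subr_eq0 (negbTE Ha1) /= => /eqP.
rewrite Hb0 Hc0 Hda.
have -> : (a + a + (a * a - 0 * 0)) ^+ 2 + (a + a + 1) * (1 - (a * a - 0 * 0)) = (a^+2 + a + 1)^+2 by ring.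
by rewrite Hq expr0n.
Qed.

Lemma part2b : T = 1%:M -> (a+d + (a*d-b*c))^+2 + (a+d+1)*(1-(a*d-b*c)) = 9%:R.
Proof.
move=> ->; rewrite !mxE /=; ring.
Qed.
End S4.

Unset Implicit Arguments.
Theorem proposition6p2 (k : closedFieldType) (Hchar : [pchar k] =i pred0)
    (T : 'M[k]_2) (HT : T \in unitmx) :
  ((forall u : {ffun idx -> k}, tauA T (tauA T u) = u) ->
   forall m : nat, (0 < m)%N -> ~~ odd m ->
     [/\ nu m T = (m ^ 2)%:R / 2%:R * (1 + \det T),
         \det T = 1 -> nu m T = (m ^ 2)%:R
       & \det T = -1 -> nu m T = 0]) /\
  ((forall u : {ffun idx -> k}, tauA T (tauA T (tauA T u)) = u) ->
   [/\ nu 3 T = (\tr T + \det T) ^+ 2 + (\tr T + 1) * (1 - \det T),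
       T = 1%:M -> nu 3 T = 9%:R
     & T != 1%:M -> nu 3 T = 0]).
Proof.
have two_nz : (2%:R : k) != 0.
  apply/negP => /(natf0_pchar (isT : (0 < 2)%N)) [p].
  by rewrite Hchar.
split.
  move=> H2 m m0 ev.
  have [n ->] : exists n, m = (n.+1).*2.
    case E: m./2 => [|n].
      by move: m0; rewrite -(odd_double_half m) (negbTE ev) E.
    by exists n; rewrite -E -[LHS](odd_double_half m) (negbTE ev).
  have F : nu (n.+1).*2 T = (((n.+1).*2) ^ 2)%:R / 2%:R * (1 + \det T).
    rewrite nu_even // det2 -muln2 natrX natrM [(n.+1)%:R]mulrSr; field; exact: two_nz.
  split => //.
    by move=> Hd; rewrite F Hd; field; exact: two_nz.
  by move=> Hd; rewrite F Hd addrN mulr0.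
move=> H3; rewrite det2 tr2; split.
- exact: nu3_val.
- by move=> H; rewrite nu3_val part2b.
- by move=> H; rewrite nu3_val part2c.
Qed.
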